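(* Let $k,n\in\mathbb{N}$ with $2n\ge k$. For $i\in\mathbb{N}$ put $x_i=\frac{1+(-1)^{i}}{2}\cdot\frac{[(i-1)!!]^2}{i+1}$ (so $(x_1,x_2,x_3,x_4,x_5,x_6,\dots)=(0,\tfrac13,0,\tfrac95,0,\tfrac{225}{7},\dots)$). Then \[ \mathrm{B}_{2n,k}\bigl(x_1,x_2,\dots,x_{2n-k+1}\bigr)=(-1)^{n+k}\frac{(4n)!!}{(2n+k)!}\sum_{q=1}^{k}(-1)^{q}\binom{2n+k}{k-q}\,Q(q,2n;2). \]
   Context: Partial Bell polynomials: for $n\ge k\ge0$, \[ \mathrm{B}_{n,k}(x_1,\dots,x_{n-k+1})=\sum\frac{n!}{\prod_{i=1}^{n-k+1}\ell_i!}\prod_{i=1}^{n-k+1}\left(\frac{x_i}{i!}\right)^{\ell_i}, \] the sum over all $(\ell_1,\dots,\ell_{n-k+1})\in\mathbb{N}_0^{n-k+1}$ with $\sum_i i\ell_i=n$ and $\sum_i\ell_i=k$. Double factorials: $(2p)!!=2^p p!$, $(2p-1)!!=1\cdot3\cdots(2p-1)$, $0!!=(-1)!!=1$. $s(n,k)$ denotes the signed Stirling numbers of the first kind, defined by $\frac{[\ln(1+x)]^k}{k!}=\sum_{n=k}^\infty s(n,k)\frac{x^n}{n!}$ for $|x|<1$; equivalently $\prod_{j=0}^{n-1}(z-j)=\sum_{k=0}^n s(n,k)z^k$. For $m\in\mathbb{N}$, $k\in\mathbb{N}_0$ and $\alpha\in\mathbb{R}$ define \[ Q(m,k;\alpha)=\sum_{\ell=0}^{k}\binom{m+\ell-1}{m-1}\,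 s(m+k-1,m+\ell-1)\left(\frac{m+k-\alpha}{2}\right)^{\ell}, \] with the convention $0^0=1$. *)

(* Defs.v *)
From mathcomp Require Import all_boot all_order all_algebra.
Set Implicit Arguments. Unset Strict Implicit. Unset Printing Implicit Defensive.
Import Order.TTheory GRing.Theory Num.Theory.
Local Open Scope ring_scope.

Fixpoint dfact (n : nat) : nat :=
  match n with
  | 0 => 1
  | 1 => 1
  | (m.+1 as p).+1 => (p.+1 * dfact m)%N
  end.

(* The sum ranges over (l_1,...,l_{n-k+1}) in N_0 with sum i l_i = n and
   sum l_i = k; the bound l_i <= n is automatic from sum i l_i = n.
   Index j : 'I_(n-k+1) represents i = j+1. *)
Definition bellB (n k : nat) (x : nat -> rat) : rat :=
  \sum_(l : {ffun 'I_(n - k + 1) -> 'I_n.+1} |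
          ((\sum_(j : 'I_(n - k + 1)) (j.+1 * l j) == n)%N && (\sum_(j : 'I_(n - k + 1)) (l j : nat) == k)%N))
    ((n`!)%:R / (\prod_(j : 'I_(n - k + 1)) (l j)`!)%:R
      * \prod_(j : 'I_(n - k + 1)) (x j.+1 / ((j.+1)`!)%:R) ^+ l j).

Definition stirling1 (n k : nat) : rat :=
  (\prod_(j < n) ('X - (j%:R)%:P) : {poly rat})`_k.

(* Q(m,k;alpha), for m >= 1 (uses 0^0 = 1, which holds for ^+ ). *)
Definition Qfun (m k : nat) (alpha : rat) : rat :=
  \sum_(l < k.+1)
    ('C(m + l - 1, m - 1))%:R * stirling1 (m + k - 1) (m + l - 1)
      * (((m + k)%:R - alpha) / 2%:R) ^+ l.

(* Main.v *)
Require Import Defs.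
From mathcomp Require Import all_boot all_order all_algebra.
From mathcomp Require Import ring lra zify.
Set Implicit Arguments. Unset Strict Implicit. Unset Printing Implicit Defensive.
Import Order.TTheory GRing.Theory Num.Theory.
Local Open Scope ring_scope.

Definition eqlow (m : nat) (p q : {poly rat}) := forall i, (i < m)%N -> p`_i = q`_i.

Lemma eqlowM m p p' q q' : eqlow m p p' -> eqlow m q q' -> eqlow m (p * q) (p' * q').
Proof.
move=> hp hq i lti; rewrite !coefM; apply: eq_bigr => j _.
have hj : (j <= i)%N by rewrite -ltnS.
rewrite hp ?hq //; [lia | lia].
Qed.

Lemma eqlowX m p q k : eqlow m p q -> eqlow m (p ^+ k) (q ^+ k).
Proof.
move=> h; elim: k => [|k IH]; first by move=> i _.
by rewrite !exprS; apply: eqlowM.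
Qed.

Lemma eqlow_mul0 m r u : eqlow m u 0 -> eqlow m (r * u) 0.
Proof. move=> h; have := eqlowM (p := r) (p' := r) (fun i _ => erefl) h.
by rewrite mulr0. Qed.

Lemma eqlow_sym m p q : eqlow m p q -> eqlow m q p.
Proof. by move=> h i hi; rewrite h. Qed.

Lemma eqlow_sub0 m p q : eqlow m p q <-> eqlow m (p - q) 0.
Proof.
split=> h i hi; have := h i hi; rewrite coefB coef0.
  by move=> ->; rewrite subrr.
by move/eqP; rewrite subr_eq0 => /eqP.
Qed.
Definition xx (i : nat) : rat :=
  (1 + (-1) ^+ i) / 2%:R * ((dfact i.-1) ^ 2)%:R / (i.+1)%:R.
Definition al (i : nat) : rat := xx i / (i`!)%:R.

Lemma dfact_pred m : dfact m.+1 = (m.+1 * dfact m.-1)%N.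
Proof. by case: m => [|m] //=; rewrite muln1. Qed.

Lemma al0 : al 0 = 1.
Proof. by rewrite /al /xx /= expr0 exp1n fact0; field. Qed.

Lemma al1 : al 1 = 0.
Proof. by rewrite /al /xx expr1 subrr !mul0r. Qed.

Lemma al_rec m : (m.+2 * m.+3)%:R * al m.+2 = (m.+1 ^ 2)%:R * al m.
Proof.
rewrite /al /xx [m.+2.-1]/= dfact_pred !exprS !mulN1r opprK.
rewrite !factS !natrX !natrM.
set s := 1 + _. set d := (dfact m.-1)%:R.
have h1 : m.+1%:R != 0 :> rat by rewrite pnatr_eq0.
have h2 : m.+2%:R != 0 :> rat by rewrite pnatr_eq0.
have h3 : m.+3%:R != 0 :> rat by rewrite pnatr_eq0.
have h4 : m`!%:R != 0 :> rat by rewrite pnatr_eq0 -lt0n fact_gt0.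
move: h1 h2 h3 h4.
set a1 := m.+1%:R. set a2 := m.+2%:R. set a3 := m.+3%:R. set f := m`!%:R.
move=> h1 h2 h3 h4.
clearbody a1 a2 a3 f s d. by field; rewrite h1 h2 h3 h4.
Qed.

Definition BD (D : nat) : {poly rat} := \poly_(i < D) al i.
Definition AD D := 'X * BD D.
Definition yD D := (AD D)^`().

Lemma yD_coef D i : (yD D)`_i = if (i < D)%N then al i * i.+1%:R else 0.
Proof.
rewrite /yD /AD coef_deriv coefXM /= coef_poly.
by case: ifP => _; rewrite ?mul0rn // mulr_natr.
Qed.

Lemma ode1 D : eqlow D.-1 ((yD D)^`() - 'X^2 * (yD D)^`()) ('X * yD D).
Proof.
move=> i hi; rewrite coefB coefXnM coefXM !(coef_deriv (yD D)) !yD_coef.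
have hD : (i.+1 < D)%N by lia.
case: i hi hD => [|[|m]] hi hD /=.
- by rewrite hD al1 mul0r mul0rn subr0.
- rewrite !ifT; [|lia|lia].
  have h := al_rec 0; rewrite al0 mulr1 exp1n mulr1n in h.
  rewrite al0 mulr1 subr0; apply: etrans _ h.
  by rewrite -mulr_natr natrM; ring.
- have hm : (m.+1 < D)%N by apply: ltn_trans hD; rewrite ltnS ltnW.
  rewrite !subSS !subn0 hD hm.
  rewrite -(mulr_natr (al m.+3 * _)) -(mulr_natr (al m.+1 * _)).
  have -> : al m.+3 * m.+4%:R * m.+3%:R = (m.+3 * m.+4)%:R * al m.+3.
    by rewrite natrM; ring.
  rewrite al_rec natrX; ring.
Qed.

Definition SD D := yD D * yD D - 'X^2 * (yD D * yD D).

Lemma SD_deriv D : (SD D)^`() =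
  (2%:R * yD D) * (((yD D)^`() - 'X^2 * (yD D)^`()) - 'X * yD D).
Proof.
rewrite /SD derivB (derivM (GRing.exp _ _)) derivXn !(derivM (yD D)) /= expr1.
set y := yD D. set y' := y^`(). rewrite -(mulr_natr 'X). ring.
Qed.

Lemma ode2 D : eqlow D (SD D) 1.
Proof.
have h0 : eqlow D.-1 (SD D)^`() 0.
  rewrite SD_deriv; apply: eqlow_mul0; apply: (proj1 (eqlow_sub0 _ _ _)); exact: ode1.
move=> [|j] hj.
  rewrite /SD coefB coefXnM /= subr0 coef0M yD_coef hj al0 mul1r coefC /=.
  by [].
have := h0 j; rewrite coef_deriv coef0 coefC /= => h.
have : (SD D)`_j.+1 *+ j.+1 == 0 by rewrite h //; lia.
by rewrite mulrn_eq0 => /orP [//|/eqP].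
Qed.

Lemma ode3_id D j :
  let A := AD D in let G1 := (A ^+ j)^`() in let G2 := G1^`() in
  G2 - 'X^2 * G2 - 'X * G1 =
  ((yD D)^`() - 'X^2 * (yD D)^`() - 'X * yD D) * A ^+ j.-1 *+ j
  + SD D * A ^+ j.-1.-1 *+ (j * j.-1).
Proof.
move=> A G1 G2; rewrite /G2 /G1 deriv_exp derivMn derivM deriv_exp /SD.
rewrite -/(yD D). set y := yD D. set y' := y^`().
rewrite mulrnA. ring.
Qed.

Lemma ode3 D j : eqlow D.-1
  (((AD D ^+ j)^`())^`() - 'X^2 * ((AD D ^+ j)^`())^`() - 'X * (AD D ^+ j)^`())
  (AD D ^+ j.-1.-1 *+ (j * j.-1)).
Proof.
rewrite (ode3_id D j); set A := AD D.
have e1 : eqlow D.-1 (((yD D)^`() - 'X^2 * (yD D)^`() - 'X * yD D) * A ^+ j.-1 *+ j) 0.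
  rewrite -mulr_natl mulrA mulrC; apply: eqlow_mul0; apply: eqlow_mul0.
  apply: (proj1 (eqlow_sub0 _ _ _)); exact: ode1.
have e2 : eqlow D.-1 (SD D * A ^+ j.-1.-1 *+ (j * j.-1)) (A ^+ j.-1.-1 *+ (j * j.-1)).
  rewrite -(mulr_natl (SD D * _)) -(mulr_natl (A ^+ _)) mulrA; apply: eqlowM => // i hi.
  rewrite mulr_natl !coefMn ode2 //; lia.
by move=> i hi; rewrite coefD e1 // e2 // coef0 add0r.
Qed.

Lemma Arec D j N : (N.+1 < D)%N ->
  (N.+1 * N.+2)%:R * (AD D ^+ j)`_N.+2 =
  (N ^ 2)%:R * (AD D ^+ j)`_N + (j * j.-1)%:R * (AD D ^+ j.-1.-1)`_N.
Proof.
move=> hN; have hN' : (N < D.-1)%N by lia.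
have := @ode3 D j N hN'.
set A := AD D.
rewrite !coefB coefXnM coefXM !coef_deriv coefMn.
case: N hN hN' => [|[|m]] hN hN' /=.
- rewrite [(j * j.-1)%:R * _]mulr_natl; set t := _ *+ (j * j.-1); move=> h; rewrite -h; ring.
- rewrite [(j * j.-1)%:R * _]mulr_natl; set t := _ *+ (j * j.-1); move=> h; rewrite -h; ring.
- rewrite [(j * j.-1)%:R * _]mulr_natl !subSS !subn0; set t := _ *+ (j * j.-1); move=> h.
  rewrite -h; ring.
Qed.
Lemma coefXaddC_exp (c : rat) i m :
  (('X + c%:P) ^+ i)`_m = ('C(i, m))%:R * c ^+ (i - m).
Proof.
rewrite addrC exprDn coef_sum.
under eq_bigr => k _ do rewrite coefMn -(rmorphXn polyC) coefCM coefXn.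
case: (ltnP i m) => him.
  rewrite bin_small // mul0r; apply: big1 => k _.
  rewrite (_ : (m == k) = false) /= ?mulr0n ?mulr0 ?mul0rn //.
  apply/eqP; have := ltn_ord k; lia.
rewrite (bigD1 (Ordinal (him : (m < i.+1)%N))) //= eqxx /= mulr1n mulr1.
rewrite big1 ?addr0; first by rewrite mulr_natl.
move=> k hk; rewrite (_ : (m == k) = false) /= ?mulr0n ?mulr0 ?mul0rn //.
by apply/negbTE; move: hk; rewrite -val_eqE /= eq_sym.
Qed.

Lemma coef_taylor (p : {poly rat}) c m :
  (p \Po ('X + c%:P))`_m = \sum_(i < size p) p`_i * ('C(i, m))%:R * c ^+ (i - m).
Proof.
rewrite comp_polyE coef_sum; apply: eq_bigr => i _.
by rewrite coefZ coefXaddC_exp mulrA.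
Qed.

Definition Pst N : {poly rat} := \prod_(j < N) ('X - (j%:R)%:P).
Definition cN (N : nat) : rat := (N%:R - 2%:R) / 2%:R.
Definition TT N := Pst N.-1 \Po ('X + (cN N)%:P).

Lemma size_Pst N : size (Pst N) = N.+1.
Proof. by rewrite /Pst -(big_mkord xpredT (fun j => ('X - (j%:R)%:P))) size_prod_XsubC /index_iota size_iota subn0. Qed.

Lemma Qfun_TT q n : (1 <= q)%N -> Qfun q (2 * n) 2%:R = (TT (q + 2 * n))`_q.-1.
Proof.
case: q => [//|q] _.
rewrite /TT coef_taylor size_Pst /Qfun.
have -> : (q.+1 + 2 * n).-1.+1 = (q + (2 * n).+1)%N by lia.
rewrite big_split_ord /= [X in _ = X + _]big1 ?add0r; last first.
  by move=> i _; rewrite bin_small ?mulr0 ?mul0r.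
apply: eq_bigr => l _.
have -> : (q.+1 + l - 1 = q + l)%N by lia.
have -> : (q.+1 - 1 = q)%N by lia.
have -> : (q.+1 + 2 * n - 1 = q + 2 * n)%N by lia.
have -> : (q + l - q = l)%N by lia.
rewrite /stirling1 /cN.
by rewrite /Pst; ring.
Qed.

Lemma TT_prod N : TT N = \prod_(j < N.-1) ('X - (j%:R - cN N)%:P).
Proof.
rewrite /TT /Pst.
rewrite (big_morph _ (fst (comp_poly_multiplicative _)) (snd (comp_poly_multiplicative _))).
apply: eq_bigr => j _; rewrite comp_polyB comp_polyX comp_polyC polyCB.
ring.
Qed.

Lemma TT_lead q : (1 <= q)%N -> (TT q)`_q.-1 = 1.
Proof.
move=> hq; rewrite TT_prod.
have hs : size (\prod_(j < q.-1) ('X - (j%:R - cN q)%:P)) = q.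
  rewrite -(big_mkord xpredT (fun j => ('X - (j%:R - cN q)%:P))).
  by rewrite size_prod_XsubC /index_iota size_iota subn0; lia.
have := lead_coef_prod_XsubC (index_enum 'I_q.-1) xpredT (fun j : 'I_q.-1 => j%:R - cN q).
by rewrite lead_coefE hs.
Qed.

Lemma TT_size q : (1 <= q)%N -> size (TT q) = q.
Proof.
move=> hq; rewrite TT_prod.
rewrite -(big_mkord xpredT (fun j => ('X - (j%:R - cN q)%:P))).
by rewrite size_prod_XsubC /index_iota size_iota subn0; lia.
Qed.

Lemma TT_rec M : TT M.+3 = ('X^2 - ((M.+1%:R) ^+ 2 / 4%:R)%:P) * TT M.+1.
Proof.
rewrite !TT_prod /= big_ord_recl big_ord_recr /=.
have -> : \prod_(i < M) ('X - ((bump 0 (widen_ord (leqnSn M) i))%:R - cN M.+3)%:P)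
        = \prod_(i < M) ('X - (i%:R - cN M.+1)%:P).
  apply: eq_bigr => i _; congr (_ - _%:P).
  rewrite /bump /= add1n /cN -(addn1 i) natrD -!(addn3 M) -(addn1 M) !natrD; field.
  by [].
set P := \prod_(i < M) _.
have hb : (bump 0 M)%:R - cN M.+3 = cN M.+3.
  by rewrite /bump /= add1n /cN -(addn3 M) -(addn1 M) !natrD; field.
have hc : (M.+1%:R ^+ 2 / 4%:R : rat) = cN M.+3 ^+ 2.
  by rewrite /cN -(addn3 M) -(addn1 M) !natrD; field.
rewrite hb hc (rmorphXn polyC) sub0r polyCN opprK.
ring.
Qed.

Lemma TT_rec_coef M i : (TT M.+3)`_i =
  (if (i < 2)%N then 0 else (TT M.+1)`_(i - 2)) - (M.+1%:R) ^+ 2 / 4%:R * (TT M.+1)`_i.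
Proof. by rewrite TT_rec mulrBl coefB coefXnM coefCM. Qed.

Lemma AD_pow_diag D q : (0 < D)%N -> (AD D ^+ q)`_q = 1.
Proof.
move=> hD; rewrite /AD exprMn coefXnM ltnn subnn.
elim: q => [|q IH]; first by rewrite expr0 coefC.
by rewrite exprS coef0M IH mulr1 coef_poly hD al0.
Qed.

Lemma Aclosed D q n : (1 <= q)%N -> (2 * n + q < D)%N ->
  (AD D ^+ q)`_(2 * n + q) =
  (q`!)%:R / ((2 * n + q)`!)%:R * (-4) ^+ n * (TT (2 * n + q))`_q.-1.
Proof.
elim/ltn_ind: q n => q IHq n.
elim: n => [|n IHn] hq hD.
  rewrite muln0 add0n AD_pow_diag ?TT_lead //; last by lia.
  by rewrite expr0 !mulr1 divff // pnatr_eq0 -lt0n fact_gt0.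
have IH := IHn hq ltac:(lia).
have hterm : (q * q.-1)%:R * (AD D ^+ q.-1.-1)`_(2 * n + q) =
   q`!%:R / (2 * n + q)`!%:R * (-4) ^+ n.+1 *
   (if (q.-1 < 2)%N then 0 else (TT (2 * n + q))`_(q.-1 - 2)).
  clear IHn; case: q IHq hq hD IH => [//|[|[|q]]] IHq hq hD IH.
  - by rewrite /= muln0 mul0r mulr0.
  - rewrite /= mulr0 expr0 coefC (_ : (2 * n + 2 == 0)%N = false) ?mulr0 //.
    by apply/negbTE; lia.
  - rewrite /= subn2.
    have := IHq q.+1 ltac:(lia) n.+1 ltac:(lia) ltac:(lia).
    have -> : (2 * n.+1 + q.+1 = 2 * n + q.+3)%N by lia.
    move=> ->; rewrite !factS !natrM; field.
    by rewrite pnatr_eq0 -lt0n fact_gt0.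
move: IH hterm; move Ndef: (2 * n + q)%N => N IH hterm.
have eN : (2 * n.+1 + q = N.+2)%N by lia.
rewrite eN.
have hN : (N.+1 < D)%N by lia.
have hA := @Arec D q N hN.
case: N Ndef IH hterm eN hN hA => [|M] Ndef IH hterm eN hN hA; first by lia.
rewrite TT_rec_coef.
have hnz : ((M.+2 * M.+3)%:R : rat) != 0 by rewrite pnatr_eq0.
apply: (mulfI hnz); rewrite hA IH hterm.
rewrite !factS !natrM exprS.
set t1 := (TT M.+1)`_q.-1.
set t2 := (if (q.-1 < 2)%N then 0 else _).
have hf : (M`!%:R : rat) != 0 by rewrite pnatr_eq0 -lt0n fact_gt0.
move: hf; set f := M`!%:R => hf.
set m1 := M.+1%:R. set m2 := M.+2%:R. set m3 := M.+3%:R.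
have h1 : m1 != 0 by rewrite pnatr_eq0.
have h2 : m2 != 0 by rewrite pnatr_eq0.
have h3 : m3 != 0 by rewrite pnatr_eq0.
clearbody f m1 m2 m3 t1 t2.
field.
by rewrite h1 h2 h3 hf.
Qed.
Definition Eexp (N : nat) (z : {poly rat}) : {poly {poly rat}} :=
  \sum_(m < N) (((m`!)%:R^-1 : rat) *: z ^+ m)%:P * 'X^m.

Lemma Eexp_coef N z m : (m < N)%N -> (Eexp N z)`_m = ((m`!)%:R^-1 : rat) *: z ^+ m.
Proof.
move=> hm; rewrite /Eexp coef_sum.
under eq_bigr => k _ do rewrite coefCM coefXn.
rewrite (bigD1 (Ordinal hm)) //= eqxx /= mulr1n mulr1 big1 ?addr0 //.
move=> k hk; rewrite (_ : (m == k) = false) /= ?mulr0n ?mulr0 //.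
by apply/negbTE; move: hk; rewrite -val_eqE /= eq_sym.
Qed.

Lemma prod_Eexp_coef (I : Type) (r : seq I) (z : I -> {poly rat}) N i : (i < N)%N ->
  (\prod_(j <- r) Eexp N (z j))`_i = ((i`!)%:R^-1 : rat) *: (\sum_(j <- r) z j) ^+ i.
Proof.
elim: r i => [|a r IH] i hi.
  rewrite !big_nil coef1; case: i hi => [|i] hi; first by rewrite expr0 /= invr1 scale1r.
  by rewrite expr0n /= scaler0.
rewrite !big_cons coefM.
rewrite addrC exprDn scaler_sumr; apply: eq_bigr => m _.
have hm' := ltn_ord m.
rewrite Eexp_coef ?IH; [|lia|lia].
rewrite -scalerAl -scalerAr scalerA -scaler_nat scalerA.
congr (_ *: _); last by rewrite mulrC.
have hm : (m <= i)%N by rewrite -ltnS.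
have := bin_fact hm; move/(congr1 (fun x => (x%:R : rat))); rewrite !natrM => hb.
have f1 : (m`!%:R : rat) != 0 by rewrite pnatr_eq0 -lt0n fact_gt0.
have f2 : ((i - m)`!%:R : rat) != 0 by rewrite pnatr_eq0 -lt0n fact_gt0.
rewrite -hb; field.
by rewrite f1 f2 pnatr_eq0 -lt0n bin_gt0 hm.
Qed.

Lemma prod_CX (I : finType) (a : I -> rat) (e : I -> nat) :
  \prod_(j : I) (a j *: 'X^(e j)) = (\prod_j a j) *: 'X^(\sum_j e j).
Proof.
rewrite -mul_polyC; under eq_bigr => j _ do rewrite -mul_polyC.
by rewrite big_split /= -rmorph_prod prodrXr.
Qed.

Lemma prod_CX2 (I : finType) (a : I -> {poly rat}) (e : I -> nat) :
  \prod_(j : I) ((a j)%:P * 'X^(e j)) = (\prod_j a j)%:P * 'X^(\sum_j e j).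
Proof. by rewrite big_split /= -rmorph_prod prodrXr. Qed.

Lemma multinom (c : nat -> rat) M N n k : (k < N)%N ->
  \sum_(l : {ffun 'I_M -> 'I_N} | (\sum_(j : 'I_M) (j.+1 * l j) == n)%N && (\sum_(j : 'I_M) (l j : nat) == k)%N)
    ((\prod_(j : 'I_M) ((l j)`!)%:R)^-1 * \prod_(j : 'I_M) (c j) ^+ l j)
  = (('X * \poly_(i < M) c i) ^+ k)`_n / (k`!)%:R.
Proof.
move=> hk.
set z := fun j : 'I_M => c j *: 'X^(j.+1).
have hF : 'X * \poly_(i < M) c i = \sum_(j : 'I_M) z j.
  rewrite poly_def mulr_sumr; apply: eq_bigr => j _.
  by rewrite /z -scalerAr -exprS.
have hb := prod_Eexp_coef (index_enum 'I_M) z hk.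
move/(congr1 (fun p : {poly rat} => p`_n)): hb; rewrite coefZ -hF => hb.
rewrite mulrC -hb.
rewrite /Eexp bigA_distr_bigA /= coef_sum coef_sum.
rewrite big_mkcond /=; apply: eq_bigr => l _.
have e1 : \prod_(i : 'I_M) (((((l i)`!%:R^-1 : rat) *: z i ^+ l i)%:P * 'X^(l i)) : {poly {poly rat}})
   = (\prod_(i : 'I_M) ((((l i)`!%:R^-1 : rat) * c i ^+ l i) *: 'X^(i.+1 * l i)))%:P
        * 'X^(\sum_(i : 'I_M) (l i : nat)).
  rewrite -prod_CX2; apply: eq_bigr => i _.
  by rewrite /z exprZn scalerA exprM.
rewrite e1 coefCM coefXn prod_CX mulr_natr coefMn coefZ coefXn.
rewrite [\prod_(j < M) (_ * _)]big_split /= prodfV [n == _]eq_sym [k == _]eq_sym.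
by case: (_ == n); case: (_ == k) => /=; rewrite ?mulr1n ?mulr0n ?mulr1 ?mulr0.
Qed.
Lemma dfact_even m : dfact (2 * m) = (2 ^ m * m`!)%N.
Proof.
elim: m => [//|m IH].
rewrite mulnS /= IH factS expnS; lia.
Qed.

Lemma final_term (n k q : nat) (T : rat) : (1 <= q)%N -> (q <= k)%N ->
  (2*n)`!%:R / k`!%:R * ((-1) ^+ (k - q) * (q`!%:R / (2*n+q)`!%:R * (-4) ^+ n * T) *+ 'C(k, q))
  = (-1) ^+ (n + k) * (dfact (4 * n))%:R / ((2 * n + k)`!)%:R *
    ((-1) ^+ q * ('C(2 * n + k, k - q))%:R * T).
Proof.
move=> hq1 hqk.
have e1 : (-1) ^+ (n + k) = (-1) ^+ n * (-1) ^+ (k - q) * (-1) ^+ q :> rat.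
  by rewrite -!exprD; congr (_ ^+ _); lia.
have e2 : (dfact (4 * n))%:R = 4 ^+ n * (2 * n)`!%:R :> rat.
  have -> : (4 * n = 2 * (2 * n))%N by lia.
  by rewrite dfact_even natrM natrX exprM.
have e3 : (-4) ^+ n = (-1) ^+ n * 4 ^+ n :> rat by rewrite -exprMn mulN1r.
have hu : ((-1) ^+ q * (-1) ^+ q : rat) = 1.
  by rewrite -exprD addnn -mul2n exprM expr2 mulN1r opprK expr1n.
have b1 := bin_fact hqk.
have hqk' : (k - q <= 2 * n + k)%N by lia.
have b2 := bin_fact hqk'.
rewrite (_ : (2 * n + k - (k - q) = 2 * n + q)%N) in b2; last by lia.
move/(congr1 (fun x => (x%:R : rat))): b1; rewrite !natrM => b1.
move/(congr1 (fun x => (x%:R : rat))): b2; rewrite !natrM => b2.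
rewrite e1 e2 e3 -[_ *+ 'C(k, q)]mulr_natr -b1 -b2.
set u := (-1) ^+ q. set s := (-1) ^+ (k - q). set w := (-1) ^+ n.
set c1 := 'C(k, q)%:R. set c2 := 'C(2 * n + k, k - q)%:R.
set f1 := q`!%:R. set f2 := (k - q)`!%:R. set f3 := (2 * n + q)`!%:R. set f4 := (2*n)`!%:R.
set p4 := (4 : rat) ^+ n.
have nz1 : c1 != 0 by rewrite pnatr_eq0 -lt0n bin_gt0.
have nz2 : c2 != 0 by rewrite pnatr_eq0 -lt0n bin_gt0.
have nz3 : f1 != 0 by rewrite pnatr_eq0 -lt0n fact_gt0.
have nz4 : f2 != 0 by rewrite pnatr_eq0 -lt0n fact_gt0.
have nz5 : f3 != 0 by rewrite pnatr_eq0 -lt0n fact_gt0.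
transitivity (w * s * (u * u) * (p4 * f4) / (c2 * (f2 * f3)) * (c2 * T)); last by ring.
rewrite hu.
clearbody c1 c2 f1 f2 f3 f4 u s w p4.
field.
by rewrite nz1 nz2 nz3 nz4 nz5.
Qed.


Lemma step1 n k : (k <= n)%N ->
  bellB n k xx = n`!%:R / k`!%:R * (('X * \poly_(i < n - k + 1) al i.+1) ^+ k)`_n.
Proof.
move=> hkn; rewrite /bellB.
transitivity (n`!%:R * \sum_(l : {ffun 'I_(n - k + 1) -> 'I_n.+1} |
     (\sum_(j : 'I_(n - k + 1)) (j.+1 * l j) == n)%N && (\sum_(j : 'I_(n - k + 1)) (l j : nat) == k)%N)
    ((\prod_(j : 'I_(n - k + 1)) ((l j)`!)%:R)^-1 * \prod_(j : 'I_(n - k + 1)) (al j.+1) ^+ l j)).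
  rewrite mulr_sumr; apply: eq_bigr => l _.
  by rewrite natr_prod mulrA.
have hkN : (k < n.+1)%N by lia.
have h := @multinom (fun i => al i.+1) (n - k + 1) n.+1 n k hkN.
rewrite /= in h; rewrite h.
ring.
Qed.

Lemma BD_minus1 D : (0 < D)%N -> BD D - 1 = 'X * \poly_(i < D.-1) al i.+1.
Proof.
move=> hD; apply/polyP => i; rewrite coefB coefXM coef1 /BD !coef_poly.
case: i => [|i] /=; first by rewrite hD al0 subrr.
rewrite subr0; case: D hD => [//|D] _ /=.
by [].
Qed.

Lemma stepB n k D : (k <= n)%N -> (n - k + 1 <= D.-1)%N ->
  (('X * \poly_(i < n - k + 1) al i.+1) ^+ k)`_n = ((BD D - 1) ^+ k)`_n.
Proof.
move=> hkn hD; rewrite BD_minus1; last by lia.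
rewrite !exprMn !coefXnM; case: ifP => // _.
have h : eqlow (n - k + 1) (\poly_(i < n - k + 1) al i.+1) (\poly_(i < D.-1) al i.+1).
  move=> i hi; rewrite !coef_poly hi ifT //; lia.
by apply: (eqlowX k h); lia.
Qed.

Lemma coef_signM m (p : {poly rat}) i : ((-1) ^+ m * p)`_i = (-1) ^+ m * p`_i.
Proof.
elim: m => [|m IH]; first by rewrite !expr0 !mul1r.
by rewrite !exprS !mulN1r !mulNr coefN IH.
Qed.

Lemma stepC D k N : ((BD D - 1) ^+ k)`_N =
  \sum_(i < k.+1) (-1) ^+ (k - i) * (BD D ^+ i)`_N *+ 'C(k, i).
Proof.
rewrite addrC exprDn coef_sum; apply: eq_bigr => i _.
by rewrite coefMn coef_signM.
Qed.

Lemma BD_AD D i N : (BD D ^+ i)`_N = (AD D ^+ i)`_(N + i).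
Proof.
rewrite /AD exprMn coefXnM ifF ?addnK //; lia.
Qed.

Theorem theorem3p1 (k n : nat) (hk : (1 <= k)%N) (hn : (1 <= n)%N)
    (hkn : (k <= 2 * n)%N) :
  let x : nat -> rat := fun i =>
    (1 + (-1) ^+ i) / 2%:R * ((dfact i.-1) ^ 2)%:R / (i.+1)%:R in
  bellB (2 * n) k x =
    (-1) ^+ (n + k) * (dfact (4 * n))%:R / ((2 * n + k)`!)%:R
    * \sum_(1 <= q < k.+1)
        (-1) ^+ q * ('C(2 * n + k, k - q))%:R * Qfun q (2 * n) 2%:R.
Proof.
move=> x.
rewrite (_ : x = xx) // step1 // (stepB (D := (2 * n + k).+1)) //; last by lia.
rewrite stepC.
rewrite -(big_mkord xpredT (fun i => (-1) ^+ (k - i) * (BD (2 * n + k).+1 ^+ i)`_(2 * n) *+ 'C(k, i))).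
rewrite big_ltn // expr0 coef1 (_ : (2 * n == 0)%N = false) /=; last by apply/negbTE; lia.
rewrite mulr0 mul0rn add0r !mulr_sumr.
apply: eq_big_nat => i /andP [hi1 hik].
rewrite BD_AD Aclosed //; last by lia.
rewrite Qfun_TT // [(i + 2 * n)%N]addnC.
by apply: final_term; lia.
Qed.
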